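(* Let $U$ be a subgroup of $G^*$, let $(p_j)_{j=1}^R\in\mathcal{P}^R$ be a system of representatives of the $U$-orbits of $\mathcal{P}$ (i.e. the sets $p_j^U=\{p_j^\varphi:\varphi\in U\}$, $j=1,\dots,R$, are exactly the distinct orbits $\{p^\varphi:\varphi\in U\}$, $p\in\mathcal{P}$), and let $(\mu_j)_{j=1}^R$ be matchings with $\mu_j\in C^U(p_j)$ for every $j$. Then there exists a unique resolute and $U$-symmetric matching mechanism $H$ such that $H(p_j)=\{\mu_j\}$ for every $j\in\{1,\dots,R\}$.
   Context: Fix $n\ge 2$, $W=\{1,\dots,n\}$, $M=\{n+1,\dots,2n\}$, $I=W\cup M$. Permutations compose right-to-left. A preference profile is a function $p$ on $I$ assigning to each $x\in W$ a linear order $p(x)$ on $M$ and to each $y\in M$ a linear order $p(y)$ on $W$; $\mathcal{P}$ is the set of preference profiles. A matching is a permutation $\mu$ of $I$ with $\mu(W)=M$, $\mu(M)=W$, $\mu(\mu(z))=z$; $\mathcal{M}$ is the set of matchings. $G^*=\{\varphi\in\mathrm{Sym}(I):\{\varphi(W),\varphi(M)\}=\{W,M\}\}$. For a linear order $R$ on $X\subseteq I$ and $\varphi\in\mathrm{Sym}(I)$, $\varphi R$ is the relation on $\varphi(X)$ with $(a,b)\in\varphi R$ iff $(\varphi^{-1}(a),\varphi^{-1}(b))\in R$. For $\varphi\in G^*$, $p^\varphi(z)=\varphi\,p(\varphi^{-1}(z))$ (this defines a group action of $G^*$ on $\mathcal{P}$); $\mu^\varphi=\varphi\mu\varphi^{-1}$;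 $S^\varphi=\{\mu^\varphi:\mu\in S\}$. A matching mechanism is a correspondence $F$ from $\mathcal{P}$ to $\mathcal{M}$; resolute if $|F(p)|=1$ for all $p$; $U$-symmetric if $F(p^\varphi)=F(p)^\varphi$ for all $p$, $\varphi\in U$. $\mathrm{Stab}_U(p)=\{\varphi\in U:p^\varphi=p\}$ and $C^U(p)=\{\mu\in\mathcal{M}:\mu^\varphi=\mu\text{ for all }\varphi\in\mathrm{Stab}_U(p)\}$. *)

(* Defs.v *)
From mathcomp Require Import all_boot all_order all_fingroup.
Set Implicit Arguments. Unset Strict Implicit. Unset Printing Implicit Defensive.

(* Agents I = {0,...,2n-1}; W = {0,...,n-1} (paper: 1..n), M = {n,...,2n-1}
   (paper: n+1..2n).  This is a harmless shift of labels by one. *)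
Definition agent (n : nat) := 'I_(n + n).
Definition Wset (n : nat) : {set agent n} := [set i : agent n | (i < n)%N].
Definition Mset (n : nat) : {set agent n} := [set i : agent n | (n <= i)%N].

Definition relI (n : nat) := {set agent n * agent n}.

Definition is_lin_order n (X : {set agent n}) (R : relI n) : Prop :=
  [/\ R \subset setX X X,
      (forall x, x \in X -> (x, x) \in R),
      (forall x y, (x, y) \in R -> (y, x) \in R -> x = y),
      (forall x y z, (x, y) \in R -> (y, z) \in R -> (x, z) \in R)
    & (forall x y, x \in X -> y \in X -> (x, y) \in R \/ (y, x) \in R)].

Definition profile (n : nat) := {ffun agent n -> relI n}.

Definition is_profile n (p : profile n) : Prop :=
  (forall x, x \in Wset n -> is_lin_order (Mset n) (p x)) /\
  (forall y, y \in Mset n -> is_lin_order (Wset n) (p y)).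

Definition is_matching n (mu : {perm agent n}) : Prop :=
  [/\ mu @: Wset n = Mset n, mu @: Mset n = Wset n & forall z, mu (mu z) = z].

Definition Gstar n : {set {perm agent n}} :=
  [set phi : {perm agent n} |
    [set phi @: Wset n; phi @: Mset n] == [set Wset n; Mset n]].

Definition act_rel n (phi : {perm agent n}) (R : relI n) : relI n :=
  [set ab | ((phi^-1)%g ab.1, (phi^-1)%g ab.2) \in R].

Definition act_prof n (phi : {perm agent n}) (p : profile n) : profile n :=
  [ffun z => act_rel phi (p ((phi^-1)%g z))].

(* mu^phi = phi mu phi^-1 (right-to-left composition), i.e. z |-> phi (mu (phi^-1 z)).
   In MathComp (s * t) z = t (s z), so this is phi^-1 * mu * phi = mu ^ phi. *)
Definition act_match n (phi mu : {perm agent n}) : {perm agent n} :=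
  (phi^-1 * mu * phi)%g.

Definition act_matchset n (phi : {perm agent n}) (S : {set {perm agent n}})
  : {set {perm agent n}} := [set act_match phi mu | mu in S].

Definition orbit_prof n (U : {set {perm agent n}}) (p : profile n) : {set profile n} :=
  [set act_prof phi p | phi in U].

Definition Stab n (U : {set {perm agent n}}) (p : profile n) : {set {perm agent n}} :=
  [set phi in U | act_prof phi p == p].

Definition in_CU n (U : {set {perm agent n}}) (p : profile n) (mu : {perm agent n}) : Prop :=
  is_matching mu /\ (forall phi, phi \in Stab U p -> act_match phi mu = mu).

(* Matching mechanisms: correspondences from P to the set of matchings
   (only the values on P matter). *)
Definition mechanism n := profile n -> {set {perm agent n}}.

Definition is_mechanism n (F : mechanism n) : Prop :=
  forall p, is_profile p -> forall mu, mu \in F p -> is_matching mu.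

Definition resolute n (F : mechanism n) : Prop :=
  forall p, is_profile p -> #|F p| = 1%N.

Definition U_symmetric n (U : {set {perm agent n}}) (F : mechanism n) : Prop :=
  forall p phi, is_profile p -> phi \in U ->
    F (act_prof phi p) = act_matchset phi (F p).

(* Main.v *)
Require Import Defs.
From mathcomp Require Import all_boot all_order all_fingroup.
Set Implicit Arguments. Unset Strict Implicit. Unset Printing Implicit Defensive.
Local Open Scope group_scope.

Lemma act_rel1 n (R : relI n) : act_rel 1 R = R.
Proof. by apply/setP => -[a b]; rewrite !inE /= invg1 !perm1. Qed.

Lemma act_relM n (phi psi : {perm agent n}) R :
  act_rel (phi * psi) R = act_rel psi (act_rel phi R).
Proof. by apply/setP => -[a b]; rewrite !inE /= invMg !permM. Qed.

Lemma act_prof1 n (p : profile n) : act_prof 1 p = p.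
Proof. by apply/ffunP => z; rewrite ffunE invg1 perm1 act_rel1. Qed.

Lemma act_profM n (phi psi : {perm agent n}) p :
  act_prof (phi * psi) p = act_prof psi (act_prof phi p).
Proof. by apply/ffunP => z; rewrite !ffunE act_relM invMg permM. Qed.

Lemma act_matchE n (phi mu : {perm agent n}) : act_match phi mu = mu ^ phi.
Proof. by rewrite /act_match /conjg mulgA. Qed.

Lemma imset_invK n (phi : {perm agent n}) (A : {set agent n}) :
  phi^-1 @: (phi @: A) = A.
Proof.
rewrite -imset_comp; rewrite -[RHS]imset_id; apply: eq_imset => z /=.
by rewrite -permM mulgV perm1.
Qed.

Lemma imset_Kinv n (phi : {perm agent n}) (A : {set agent n}) :
  phi @: (phi^-1 @: A) = A.
Proof. by have := imset_invK phi^-1 A; rewrite invgK. Qed.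

Lemma WneM n : (0 < n)%N -> Wset n != Mset n.
Proof.
move=> n0; apply/negP => /eqP e.
have h0 : (0 < n + n)%N by rewrite addn_gt0 n0.
have : Ordinal h0 \in Wset n by rewrite inE.
by rewrite e inE /= leqNgt n0.
Qed.

Lemma Gstar_cases n (phi : {perm agent n}) : (0 < n)%N -> phi \in Gstar n ->
  (phi @: Wset n = Wset n /\ phi @: Mset n = Mset n) \/
  (phi @: Wset n = Mset n /\ phi @: Mset n = Wset n).
Proof.
move=> n0; rewrite inE => /eqP e.
have hW : phi @: Wset n \in [set Wset n; Mset n] by rewrite -e !inE eqxx.
have hM : phi @: Mset n \in [set Wset n; Mset n] by rewrite -e !inE eqxx orbT.
have ne : phi @: Wset n != phi @: Mset n.
  apply/negP => /eqP e2; move: (WneM n0); rewrite -(imset_invK phi (Wset n)) e2.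
  by rewrite imset_invK eqxx.
move: hW hM; rewrite !inE => /orP[] /eqP eW /orP[] /eqP eM.
- by move: ne; rewrite eW eM eqxx.
- by left.
- by right.
- by move: ne; rewrite eW eM eqxx.
Qed.

Lemma match_conj n (phi mu : {perm agent n}) : (0 < n)%N -> phi \in Gstar n ->
  is_matching mu -> is_matching (act_match phi mu).
Proof.
move=> n0 hphi [mW mM mi].
have img (A : {set agent n}) : (phi^-1 * mu * phi) @: A = phi @: (mu @: (phi^-1 @: A)).
  by rewrite -!imset_comp; apply: eq_imset => z /=; rewrite !permM.
have invW : phi^-1 @: Wset n = Wset n /\ phi^-1 @: Mset n = Mset n \/
            phi^-1 @: Wset n = Mset n /\ phi^-1 @: Mset n = Wset n.
  case: (Gstar_cases n0 hphi) => -[eW eM].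
    by left; split; [rewrite -[in LHS]eW | rewrite -[in LHS]eM]; rewrite imset_invK.
  by right; split; [rewrite -[in LHS]eM | rewrite -[in LHS]eW]; rewrite imset_invK.
split; rewrite /act_match.
- rewrite img; case: invW => -[eW eM]; case: (Gstar_cases n0 hphi) => -[fW fM];
  rewrite ?eW ?eM ?mW ?mM ?fW ?fM //;
  by move: (imset_Kinv phi (Wset n)); rewrite eW ?fW ?fM => e; rewrite e.
- rewrite img; case: invW => -[eW eM]; case: (Gstar_cases n0 hphi) => -[fW fM];
  rewrite ?eW ?eM ?mW ?mM ?fW ?fM //;
  by move: (imset_Kinv phi (Wset n)); rewrite eW ?fW ?fM => e; rewrite e.
- move=> z; rewrite !permM; rewrite -(permM phi (phi^-1)) mulgV perm1 mi.
  by rewrite -permM mulVg perm1.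
Qed.
Close Scope group_scope.
Theorem theorem10 (n : nat) (hn : (2 <= n)%N)
  (U : {group {perm agent n}}) (hU : U \subset Gstar n)
  (R : nat) (ps : 'I_R -> profile n) (mus : 'I_R -> {perm agent n})
  (hps : forall j, is_profile (ps j))
  (hdist : forall j k, orbit_prof U (ps j) = orbit_prof U (ps k) -> j = k)
  (hcover : forall q, is_profile q -> exists j, orbit_prof U q = orbit_prof U (ps j))
  (hmus : forall j, in_CU U (ps j) (mus j)) :
  (exists H : mechanism n,
     [/\ is_mechanism H, resolute H, U_symmetric U H
       & forall j, H (ps j) = [set mus j]]) /\
  (forall H1 H2 : mechanism n,
     is_mechanism H1 -> resolute H1 -> U_symmetric U H1 ->
     (forall j, H1 (ps j) = [set mus j]) ->
     is_mechanism H2 -> resolute H2 -> U_symmetric U H2 ->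
     (forall j, H2 (ps j) = [set mus j]) ->
     forall p, is_profile p -> H1 p = H2 p).
Proof.
have n0 : (0 < n)%N by apply: leq_trans hn.
have orb_sub q g : g \in U -> orbit_prof U (act_prof g q) \subset orbit_prof U q.
  move=> gU; apply/subsetP => x /imsetP [h hU' ->].
  by rewrite -act_profM; apply: imset_f; rewrite groupM.
have key j k phi psi : phi \in U -> psi \in U ->
    act_prof phi (ps j) = act_prof psi (ps k) ->
    j = k /\ act_match phi (mus j) = act_match psi (mus k).
  move=> phiU psiU e.
  have ej : ps j = act_prof (psi * phi^-1)%g (ps k).
    by rewrite act_profM -e -act_profM mulgV act_prof1.
  have ek : ps k = act_prof (phi * psi^-1)%g (ps j).
    by rewrite act_profM e -act_profM mulgV act_prof1.
  have jk : j = k.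
    apply: hdist; apply/eqP; rewrite eqEsubset.
    rewrite {1}ej orb_sub ?groupM ?groupV //.
    by rewrite {1}ek orb_sub ?groupM ?groupV.
  subst k; split => //.
  have st : (phi * psi^-1)%g \in Stab U (ps j).
    by rewrite inE groupM ?groupV //= -ek eqxx.
  have := (hmus j).2 _ st.
  rewrite !act_matchE => h.
  by rewrite -[in RHS]h -conjgM -mulgA mulVg mulg1.
pose H : mechanism n := fun p =>
  match [pick x : 'I_R * {perm agent n} | (x.2 \in U) && (p == act_prof x.2 (ps x.1))] with
  | Some x => [set act_match x.2 (mus x.1)]
  | None => set0 end.
have HE p j phi : phi \in U -> p = act_prof phi (ps j) -> H p = [set act_match phi (mus j)].
  move=> phiU ep; rewrite /H; case: pickP => [[k psi] /= /andP[psiU /eqP e] | none].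
    by have [-> ->] := key k j psi phi psiU phiU (etrans (esym e) ep).
  by move: (none (j, phi)); rewrite /= phiU ep eqxx.
have cov p : is_profile p -> exists j, exists2 phi, phi \in U & p = act_prof phi (ps j).
  move=> pp; have [j ej] := hcover p pp.
  have : p \in orbit_prof U p by rewrite -{1}(act_prof1 p); apply: imset_f; exact: group1.
  by rewrite ej => /imsetP [phi phiU ->]; exists j, phi.
split.
  exists H; split.
  - move=> p pp mu; have [j [phi phiU ep]] := cov p pp.
    rewrite (HE p j phi phiU ep) => /set1P ->.
    by apply: match_conj => //; [apply: (subsetP hU) | exact: (hmus j).1].
  - move=> p pp; have [j [phi phiU ep]] := cov p pp.
    by rewrite (HE p j phi phiU ep) cards1.
  - move=> p phi pp phiU; have [j [psi psiU ep]] := cov p pp.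
    rewrite (HE p j psi psiU ep) (HE _ j (psi * phi)%g) ?groupM //; last first.
      by rewrite ep act_profM.
    by rewrite /act_matchset imset_set1 !act_matchE conjgM.
  - move=> j; rewrite (HE _ j 1%g) ?group1 ?act_prof1 //.
    by rewrite act_matchE conjg1.
move=> H1 H2 _ _ s1 e1 _ _ s2 e2 p pp.
have [j [phi phiU ep]] := cov p pp.
by rewrite ep s1 ?s2 ?e1 ?e2 ?hps.
Qed.
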